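(* Let $n\ge2$, $t\in(0,1)$ and $A\in\mathcal K_0^n$, and set $\kappa_t(A)=\overline{\mathrm{conv}}\Big(\bigcup_{a\in A}\big[0,\tfrac{1}{1+t\|a\|}a\big]\cup t\mathbb B\Big)$. Then $\kappa_t(A)\subseteq \big(\psi_t(A^\circ)\big)^\circ$, where $\psi_t(K)=(K+t\mathbb B)\cap\frac{1-t}{t}\mathbb B$.
   Context: $\mathbb B$ is the closed Euclidean unit ball of $\mathbb R^n$, $[a,b]$ the segment between $a,b$, and $\overline{\mathrm{conv}}$ the closed convex hull. $\mathcal K_0^n$ is the family of closed convex subsets of $\mathbb R^n$ containing $0$. The polar set of $A\subseteq\mathbb R^n$ is $A^\circ=\{x\in\mathbb R^n:\sup_{a\in A}\langle a,x\rangle\le1\}$. *)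

(* Defs.v *)
From HB Require Import structures.
From mathcomp Require Import all_boot all_order all_algebra.
From mathcomp Require Import boolp classical_sets reals.
Set Implicit Arguments. Unset Strict Implicit. Unset Printing Implicit Defensive.
Import Order.TTheory GRing.Theory Num.Theory.
Local Open Scope ring_scope.
Local Open Scope classical_set_scope.

Section Defs.
Variables (R : realType) (n : nat).
Notation vec := 'rV[R]_n.

Definition dotp (u v : vec) : R := \sum_(i < n) u 0 i * v 0 i.
Definition enorm (u : vec) : R := Num.sqrt (dotp u u).

Definition eball (r : R) : set vec := [set x | enorm x <= r].

Definition eclosure (S : set vec) : set vec :=
  [set x | forall e : R, 0 < e -> exists2 y, S y & enorm (x - y) < e].
Definition eclosed (S : set vec) : Prop := eclosure S `<=` S.

Definition conv (S : set vec) : set vec :=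
  [set x | exists (m : nat) (w : 'I_m -> R) (p : 'I_m -> vec),
     [/\ forall i, 0 <= w i, \sum_(i < m) w i = 1,
         forall i, S (p i) & x = \sum_(i < m) w i *: p i]].

Definition cl_conv (S : set vec) : set vec := eclosure (conv S).

Definition convex_set (S : set vec) : Prop :=
  forall x y (s : R), S x -> S y -> 0 <= s <= 1 -> S (s *: x + (1 - s) *: y).

Definition K0 (A : set vec) : Prop := [/\ eclosed A, convex_set A & A 0].

Definition polar (A : set vec) : set vec :=
  [set x | forall a, A a -> dotp a x <= 1].

Definition seg0 (b : vec) : set vec := [set s *: b | s in [set s : R | 0 <= s <= 1]].

Definition msum (S T : set vec) : set vec := [set x + y | x in S & y in T].

Definition kappa (t : R) (A : set vec) : set vec :=
  cl_conv ((\bigcup_(a in A) seg0 ((1 + t * enorm a)^-1 *: a)) `|` eball t).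

Definition psi (t : R) (K : set vec) : set vec :=
  msum K (eball t) `&` eball ((1 - t) / t).

End Defs.

(* Main.v *)
Require Import Defs.
From HB Require Import structures.
From mathcomp Require Import all_boot all_order all_algebra.
From mathcomp Require Import boolp classical_sets reals.
From mathcomp Require Import ring lra.
Import Order.TTheory GRing.Theory Num.Theory.
Local Open Scope ring_scope.
Local Open Scope classical_set_scope.

Set Implicit Arguments. Unset Strict Implicit.
Section Helpers.
Variables (R : realType) (n : nat).
Notation vec := 'rV[R]_n.

Lemma mul_self_ge0 (x : R) : 0 <= x * x.
Proof. by rewrite -expr2 sqr_ge0. Qed.

Lemma dotpC (u v : vec) : dotp u v = dotp v u.
Proof. by apply: eq_bigr => i _; rewrite mulrC. Qed.

Lemma dotpDr (u v w : vec) : dotp u (v + w) = dotp u v + dotp u w.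
Proof. by rewrite /dotp -big_split; apply: eq_bigr => i _; rewrite mxE mulrDr. Qed.

Lemma dotpZr (u v : vec) a : dotp u (a *: v) = a * dotp u v.
Proof. by rewrite /dotp mulr_sumr; apply: eq_bigr => i _; rewrite mxE mulrCA. Qed.

Lemma dotpNr (u v : vec) : dotp u (- v) = - dotp u v.
Proof. by rewrite -scaleN1r dotpZr mulN1r. Qed.

Lemma dotp0r (u : vec) : dotp u 0 = 0.
Proof. by rewrite /dotp big1 // => i _; rewrite mxE mulr0. Qed.

Lemma dotp_sumr m (u : vec) (F : 'I_m -> vec) :
  dotp u (\sum_(i < m) F i) = \sum_(i < m) dotp u (F i).
Proof.
elim/big_ind2: _ => //; first by rewrite dotp0r.
by move=> x1 x2 y1 y2 <- <-; rewrite dotpDr.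
Qed.

Lemma dotpDl (u v w : vec) : dotp (v + w) u = dotp v u + dotp w u.
Proof. by rewrite dotpC dotpDr !(dotpC u). Qed.
Lemma dotpZl (u v : vec) a : dotp (a *: v) u = a * dotp v u.
Proof. by rewrite dotpC dotpZr dotpC. Qed.
Lemma dotpNl (u v : vec) : dotp (- v) u = - dotp v u.
Proof. by rewrite dotpC dotpNr dotpC. Qed.

Lemma dotp_ge0 (u : vec) : 0 <= dotp u u.
Proof. by apply: sumr_ge0 => i _; rewrite mul_self_ge0. Qed.

Lemma enorm_ge0 (u : vec) : 0 <= enorm u.
Proof. exact: sqrtr_ge0. Qed.

Lemma enorm_sq (u : vec) : enorm u ^+ 2 = dotp u u.
Proof. by rewrite /enorm sqr_sqrtr // dotp_ge0. Qed.

Lemma enorm0_dotp (u v : vec) : enorm u = 0 -> dotp u v = 0.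
Proof.
move=> h; have h2 : dotp u u = 0 by rewrite -enorm_sq h expr0n.
have hi := psumr_eq0P (fun i _ => mul_self_ge0 (u 0 i)) h2.
by rewrite /dotp big1 // => i _; have /eqP := hi i isT; rewrite mulf_eq0 orbb => /eqP ->; rewrite mul0r.
Qed.

Lemma CS (u v : vec) : dotp u v <= enorm u * enorm v.
Proof.
have [a0|ap] := eqVneq (enorm u) 0; first by rewrite enorm0_dotp // a0 mul0r.
have [b0|bp] := eqVneq (enorm v) 0; first by rewrite dotpC enorm0_dotp // b0 mulr0.
have ha : 0 < enorm u by rewrite lt_neqAle eq_sym ap enorm_ge0.
have hb : 0 < enorm v by rewrite lt_neqAle eq_sym bp enorm_ge0.
set a := enorm u in ha ap *; set b := enorm v in hb bp *.
have H := dotp_ge0 (b *: u - a *: v).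
have E : dotp (b *: u - a *: v) (b *: u - a *: v) =
   b^+2 * dotp u u - 2 * a * b * dotp u v + a^+2 * dotp v v.
  rewrite !dotpDl !dotpDr !dotpNl !dotpNr !dotpZl !dotpZr [dotp v u]dotpC; ring.
rewrite E -!enorm_sq -/a -/b in H.
have hab : 0 < a * b by rewrite mulr_gt0.
nra.
Qed.

Lemma conv_le (y : vec) (S : set vec) x :
  (forall z, S z -> dotp z y <= 1) -> conv S x -> dotp x y <= 1.
Proof.
move=> HS [m [w [p [w0 w1 Sp ->]]]].
rewrite dotpC dotp_sumr -w1; apply: ler_sum => i _.
by rewrite dotpZr dotpC -[X in _ <= X]mulr1 ler_wpM2l // HS.
Qed.

Lemma clos_le (y : vec) (S : set vec) x :
  (forall z, S z -> dotp z y <= 1) -> eclosure S x -> dotp x y <= 1.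
Proof.
move=> HS Hx; rewrite leNgt; apply/negP => hlt.
set d := dotp x y - 1.
have hd : 0 < d by rewrite /d subr_gt0.
have hny := enorm_ge0 y.
have he : 0 < d / (enorm y + 1) by rewrite divr_gt0 // ltr_wpDl.
have [z Sz hz] := Hx _ he.
have h1 := HS z Sz.
have h2 := CS (x - z) y.
have E : dotp x y = dotp z y + dotp (x - z) y.
  by rewrite dotpC [dotp z y]dotpC [dotp (x - z) y]dotpC dotpDr dotpNr addrCA subrr addr0.
have h3 : enorm (x - z) * enorm y <= d / (enorm y + 1) * enorm y.
  by rewrite ler_wpM2r // ltW.
have h4 : d / (enorm y + 1) * enorm y < d.
  rewrite mulrAC ltr_pdivrMr ?ltr_wpDl //; nra.
rewrite /d in hd h4 h3; lra.
Qed.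

End Helpers.

Theorem lemma4p2 (R : realType) (n : nat) (t : R) (A : set 'rV[R]_n) :
  (2 <= n)%N -> 0 < t < 1 -> K0 A ->
  kappa t A `<=` polar (psi t (polar A)).
Proof.
move=> _ /andP[t0 t1] _ x Hx y [[k hk [b hb <-]] hy].
rewrite dotpC; move: Hx; rewrite /kappa /cl_conv => Hx.
apply: clos_le; last exact: Hx.
move=> z0; apply: conv_le => z [[a Aa [s /andP[s0 s1] <-]]|hz].
  rewrite scalerA dotpZl.
  have hna := enorm_ge0 a.
  have hm : 0 < 1 + t * enorm a by rewrite ltr_wpDr ?mulr_ge0 // ltW.
  have hka : dotp a k <= 1 := hk a Aa.
  have hba := CS b a.
  have hbt : enorm b <= t := hb.
  have hc : dotp a (k + b) <= 1 + t * enorm a.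
    rewrite dotpDr [dotp a b]dotpC; have := ler_wpM2r hna hbt; lra.
  have hw : (1 + t * enorm a)^-1 * dotp a (k + b) <= 1.
    by rewrite mulrC ler_pdivrMr // mul1r.
  rewrite -mulrA; move: hw; set w := _ * dotp a (k + b) => hw.
  have : s * (w - 1) <= 0 by rewrite mulr_ge0_le0 // subr_le0.
  rewrite mulrDr mulrN1; lra.
have h := CS z (k + b).
have hz' : enorm z <= t := hz.
have hy' : enorm (k + b) <= (1 - t) / t := hy.
have hnz := enorm_ge0 z.
have hny := enorm_ge0 (k + b).
have : enorm z * enorm (k + b) <= t * ((1 - t) / t).
  by apply: ler_pM.
rewrite mulrCA divff ?mulr1 ?gt_eqF //; lra.
Qed.
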